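(* Let $\mathcal{K}$ be a discrete index set and, for each $k\in\mathcal{K}$, let $\Theta_k\subseteq\mathbb{R}^{n_k}$. Let $\pi$ be a probability distribution on $\mathcal{X}=\bigcup_{k\in\mathcal{K}}(\{k\}\times\Theta_k)$ with density $\pi(\mathbf{x})=\pi(k)\pi_k(\boldsymbol\theta_k)$, where $\pi(k)$ is the marginal probability of $k$ and $\pi_k$ the conditional density. Let $\nu$ be a univariate reference distribution with density, and for each $k$ let $T_k:\mathbb{R}^{n_k}\to\mathbb{R}^{n_k}$ be a diffeomorphism with $T_k\sharp\pi_k=\otimes_{n_k}\nu$. Consider RJMCMC across-model proposals from $(k,\boldsymbol\theta_k)$ to $(k',\boldsymbol\theta'_{k'})$, $k'\sim j_k$, constructed as follows, where for $n_{k'}\ge n_k$ with $w_k=n_{k'}-n_k$, $\bar h_{k,k'}:\mathbb{R}^{n_k}\times\mathbb{R}^{w_k}\to\mathbb{R}^{n_{k'}}$ is a volume-preserving diffeomorphism with $\bar h_{k,k'}\sharp\otimes_{n_{k'}}\nu=\otimes_{n_{k'}}\nu$: if $n_{k'}\ge n_k$, set $\mathbf{z}_k=T_k(\boldsymbol\theta_k)$, draw $\mathbf{u}_k\sim\otimes_{w_k}\nu$, and set $\boldsymbol\theta'_{k'}=T_{k'}^{-1}(\bar h_{k,k'}(\mathbf{z}_k,\mathbf{u}_k))$; if $n_{k'}<n_k$, set $(\mathbf{z}_{k'},\mathbf{u}_{k'})=\bar h_{k',k}^{-1}(T_k(\boldsymbol\theta_k))$, discard $\mathbf{u}_{k'}$,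 and set $\boldsymbol\theta'_{k'}=T_{k'}^{-1}(\mathbf{z}_{k'})$. These are accepted with the standard RJMCMC acceptance probability $$\alpha(\mathbf{x},\mathbf{x}')=1\wedge\frac{\pi(\mathbf{x}')\,j_{k'}(k)\,g_{k',k}(\mathbf{u}_{k'})}{\pi(\mathbf{x})\,j_k(k')\,g_{k,k'}(\mathbf{u}_k)}\,\big|J_{h_{k,k'}}(\boldsymbol\theta_k,\mathbf{u}_k)\big|,$$ where $h_{k,k'}$ is the composite map $(\boldsymbol\theta_k,\mathbf{u}_k)\mapsto(\boldsymbol\theta'_{k'},\mathbf{u}_{k'})$ and $g_{k,k'}$, $g_{k',k}$ are the densities ($\otimes_{w}\nu$, or $1$ if the auxiliary vector is empty) of the auxiliary variables of the forward and reverse moves. If the model-jump distributions $\{j_k\}$ are chosen such that $$\pi(k')\,j_{k'}(k)=\pi(k)\,j_k(k')\quad\text{for all }k,k'\in\mathcal{K},$$ then the proposal is rejection-free, i.e. $\alpha(\mathbf{x},\mathbf{x}')=1$ for every proposed across-model move.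
   Context: For a map $T$ and distribution $\mu$, $T\sharp\mu$ denotes the pushforward. $\otimes_n\nu$ is the $n$-fold product distribution of $\nu$. $|J_f|$ is the absolute Jacobian determinant. $j_k(k')$ is the probability of proposing model $k'$ from model $k$; $\wedge$ denotes minimum. A diffeomorphism is volume-preserving if its absolute Jacobian determinant is identically $1$. *)

(* Defs.v *)
From HB Require Import structures.
From mathcomp Require Import all_boot all_order all_algebra.
From mathcomp Require Import all_classical all_reals all_analysis.
Set Implicit Arguments. Unset Strict Implicit. Unset Printing Implicit Defensive.
Import Order.TTheory GRing.Theory Num.Theory.
Import numFieldNormedType.Exports.
Local Open Scope ring_scope.

Section RJ.
Variable R : realType.

Definition castrow (m p : nat) (e : m = p) (v : 'rV[R]_m) : 'rV[R]_p :=
  castmx (erefl 1%N, e) v.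

(** density of the n-fold product distribution (x)_m nu; equals 1 when m = 0 *)
Definition prodnu (nu : R -> R) (m : nat) (v : 'rV[R]_m) : R :=
  \prod_(i < m) nu (v ord0 i).


Definition jacdet (m : nat) (f : 'rV[R]_m -> 'rV[R]_m) (x : 'rV[R]_m) : R :=
  \det ('J f x).

Definition diffeo (m : nat) (f g : 'rV[R]_m -> 'rV[R]_m) : Prop :=
  cancel f g /\ cancel g f /\
  (forall x, differentiable f x) /\ (forall x, differentiable g x) /\
  continuous (fun x => 'J f x) /\ continuous (fun x => 'J g x).

Definition volume_preserving (m : nat) (f : 'rV[R]_m -> 'rV[R]_m) : Prop :=
  forall x, `|jacdet f x| = 1.

(** For a diffeomorphism f, "f # p = q" at the level of (Lebesgue) densities:
    by the change-of-variables formula, p(x) = q(f x) |J_f(x)|. *)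
Definition pushforward_dens (m : nat) (f : 'rV[R]_m -> 'rV[R]_m)
  (p q : 'rV[R]_m -> R) : Prop :=
  forall x, p x = q (f x) * `|jacdet f x|.

Variable K : countType.
Variable n : K -> nat.

(** Composite map h_{k,k'} : (theta_k, u_k) |-> theta'_{k'} for n_k <= n_{k'}
    (here u_{k'} is empty).  hbar k k' : R^{n_k} x R^{w_k} -> R^{n_k'}, with
    R^{n_k} x R^{w_k} encoded as 'rV_(n k + (n k' - n k)). *)
Definition h_up
  (T Tinv : forall k, 'rV[R]_(n k) -> 'rV[R]_(n k))
  (hbar : forall k k', 'rV[R]_(n k + (n k' - n k)) -> 'rV[R]_(n k + (n k' - n k)))
  (k k' : K) (le : (n k <= n k')%N) (v : 'rV[R]_(n k + (n k' - n k))) : 'rV[R]_(n k') :=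
  Tinv k' (castrow (subnKC le) (hbar k k' (row_mx (T k (lsubmx v)) (rsubmx v)))).

(** Composite map h_{k,k'} : theta_k |-> (theta'_{k'}, u_{k'}) for n_{k'} <= n_k
    (here u_k is empty); hbarinv k' k is the inverse of hbar k' k. *)
Definition h_down
  (T Tinv : forall k, 'rV[R]_(n k) -> 'rV[R]_(n k))
  (hbarinv : forall k k', 'rV[R]_(n k + (n k' - n k)) -> 'rV[R]_(n k + (n k' - n k)))
  (k k' : K) (le : (n k' <= n k)%N) (th : 'rV[R]_(n k)) : 'rV[R]_(n k' + (n k - n k')) :=
  let w := hbarinv k' k (castrow (esym (subnKC le)) (T k th)) in
  row_mx (Tinv k' (lsubmx w)) (rsubmx w).

Definition alpha_up (nu : R -> R) (piK : K -> R) (pic : forall k, 'rV[R]_(n k) -> R)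
  (j : K -> K -> R)
  (T Tinv : forall k, 'rV[R]_(n k) -> 'rV[R]_(n k))
  (hbar : forall k k', 'rV[R]_(n k + (n k' - n k)) -> 'rV[R]_(n k + (n k' - n k)))
  (k k' : K) (le : (n k <= n k')%N) (th : 'rV[R]_(n k)) (u : 'rV[R]_(n k' - n k)) : R :=
  let th' := h_up T Tinv hbar le (row_mx th u) in
  Num.min 1
    ((piK k' * pic k' th') * j k' k * 1
      / ((piK k * pic k th) * j k k' * prodnu nu u)
      * `|jacdet (fun v => castrow (esym (subnKC le)) (h_up T Tinv hbar le v))
                 (row_mx th u)|).

Definition alpha_down (nu : R -> R) (piK : K -> R) (pic : forall k, 'rV[R]_(n k) -> R)
  (j : K -> K -> R)
  (T Tinv : forall k, 'rV[R]_(n k) -> 'rV[R]_(n k))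
  (hbarinv : forall k k', 'rV[R]_(n k + (n k' - n k)) -> 'rV[R]_(n k + (n k' - n k)))
  (k k' : K) (le : (n k' <= n k)%N) (th : 'rV[R]_(n k)) : R :=
  let o := h_down T Tinv hbarinv le th in
  Num.min 1
    ((piK k' * pic k' (lsubmx o)) * j k' k * prodnu nu (rsubmx o)
      / ((piK k * pic k th) * j k k' * 1)
      * `|jacdet (fun t => castrow (subnKC le) (h_down T Tinv hbarinv le t)) th|).

End RJ.
Arguments prodnu {R} nu {m} v.

(* Main.v *)
Require Import Defs.
From HB Require Import structures.
From mathcomp Require Import all_boot all_order all_algebra.
From mathcomp Require Import all_classical all_reals all_analysis.
Import Order.TTheory GRing.Theory Num.Theory.
Import numFieldNormedType.Exports.
Local Open Scope ring_scope.
From mathcomp Require Import ring.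

Section H.
Variable R : realType.

Lemma jac_comp m p q (f : 'rV[R]_m -> 'rV[R]_p) (g : 'rV[R]_p -> 'rV[R]_q) x :
  differentiable f x -> differentiable g (f x) ->
  'J (g \o f) x = 'J f x *m 'J g (f x).
Proof.
move=> df dg; rewrite /jacobian diff_comp //.
apply/row_matrixP => i; rewrite !rowE mulmxA !mul_rV_lin1.
by []. Qed.


Lemma cont_rowl a b : continuous (fun w : 'rV[R]_a => row_mx w (0 : 'rV[R]_b)).
Proof.
move=> u A /nbhs_ballP[e /= e0 eA].
apply/nbhs_ballP; exists e => //= v [_ uv]; apply: eA; split => // i j.
case: (split_ordP j) => j' ->; rewrite ?row_mxEl ?row_mxEr ?mxE //.
exact: ballxx.
Qed.

Lemma cont_rowr a b : continuous (fun w : 'rV[R]_b => row_mx (0 : 'rV[R]_a) w).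
Proof.
move=> u A /nbhs_ballP[e /= e0 eA].
apply/nbhs_ballP; exists e => //= v [_ uv]; apply: eA; split => // i j.
case: (split_ordP j) => j' ->; rewrite ?row_mxEl ?row_mxEr ?mxE //.
exact: ballxx.
Qed.

Definition rowl a b (w : 'rV[R]_a) : 'rV[R]_(a + b) := row_mx w 0.
Definition rowr a b (w : 'rV[R]_b) : 'rV[R]_(a + b) := row_mx 0 w.
Fact rowl_lin a b : linear (@rowl a b).
Proof. by move=> c u v; rewrite /rowl scale_row_mx add_row_mx scaler0 addr0. Qed.
Fact rowr_lin a b : linear (@rowr a b).
Proof. by move=> c u v; rewrite /rowr scale_row_mx add_row_mx scaler0 addr0. Qed.
HB.instance Definition _ a b := GRing.isLinear.Build _ _ _ _ _ (@rowl_lin a b).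
HB.instance Definition _ a b := GRing.isLinear.Build _ _ _ _ _ (@rowr_lin a b).


Lemma lin1_mx_fun m p (f : 'rV[R]_m -> 'rV[R]_p) (M : 'M[R]_(m,p)) :
  (forall u, f u = u *m M) -> lin1_mx f = M.
Proof.
move=> H; apply/matrixP => i j; rewrite /lin1_mx mxE H.
by rewrite -rowE mxE.
Qed.

Lemma G_diff a b (T : 'rV[R]_a -> 'rV[R]_a) (v : 'rV[R]_(a + b)) :
  differentiable T (lsubmx v) ->
  differentiable (fun v : 'rV[R]_(a + b) => row_mx (T (lsubmx v)) (rsubmx v)) v /\
  'J (fun v : 'rV[R]_(a + b) => row_mx (T (lsubmx v)) (rsubmx v)) v
    = block_mx ('J T (lsubmx v)) 0 0 1.
Proof.
move=> dT.
have eqG : (fun v : 'rV[R]_(a + b) => row_mx (T (lsubmx v)) (rsubmx v)) =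
  (@rowl a b \o T \o lsubmx) + (@rowr a b \o rsubmx).
  apply/funext => w; rewrite addrfctE /=.
  rewrite /rowl /rowr. 
  by apply/rowP => j; case: (split_ordP j) => j' ->; rewrite [RHS]mxE !(row_mxEl, row_mxEr) !mxE ?addr0 ?add0r.
have cl : continuous (@rowl a b) by exact: cont_rowl.
have cr : continuous (@rowr a b) by exact: cont_rowr.
have d1 : differentiable (@lsubmx R 1 a b) v.
  by apply: linear_differentiable; exact: continuous_lsubmx.
have d2 : differentiable (@rsubmx R 1 a b) v.
  by apply: linear_differentiable; exact: continuous_rsubmx.
have d3 : differentiable (T \o lsubmx) v by exact: differentiable_comp.
have d4 : differentiable (rowl a b \o T \o lsubmx) v.
  apply: differentiable_comp => //; apply: differentiable_comp => //.
  exact: (@linear_differentiable _ _ _ (rowl a b)).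
have d5 : differentiable (rowr a b \o rsubmx) v.
  apply: differentiable_comp => //; exact: (@linear_differentiable _ _ _ (rowr a b)).
rewrite eqG; split; first exact: (differentiableD d4 d5).
have dr : forall x, differentiable (rowl a b) x.
  move=> x; exact: (@linear_differentiable _ _ _ (rowl a b)).
have h1 : forall u, 'd ((rowl a b \o T) \o lsubmx) v u = rowl a b ('d T (lsubmx v) (lsubmx u)).
  move=> u; rewrite (diff_comp d1) /=; last exact: differentiable_comp.
  rewrite (diff_comp dT (dr _)) /=.
  rewrite (diff_lin (f := rowl a b)) //.
  by rewrite (diff_lin (f := lsubmx)) //; exact: continuous_lsubmx.
have h2 : forall u, 'd (rowr a b \o rsubmx) v u = rowr a b (rsubmx u).
  move=> u; rewrite (diff_comp d2) /=; last exact: (@linear_differentiable _ _ _ (rowr a b)).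
  rewrite (diff_lin (f := rowr a b)) //.
  by rewrite (diff_lin (f := rsubmx)) //; exact: continuous_rsubmx.
rewrite /jacobian (diffD d4 d5); apply: lin1_mx_fun => u /=.
rewrite -[u in RHS](hsubmxK u) mul_row_block !mulmx0 mulmx1 addr0 add0r.
transitivity (rowl a b (lsubmx u *m lin1_mx ('d T (lsubmx v))) + rowr a b (rsubmx u)); last first.
  by rewrite /rowl /rowr add_row_mx addr0 add0r.
congr (_ + _).
  rewrite mul_rV_lin1; exact: (h1 u).
exact: (h2 u).
Qed.
End H.

Section H2.
Variable R : realType.

Lemma jacdet_comp m (f g : 'rV[R]_m -> 'rV[R]_m) x :
  differentiable f x -> differentiable g (f x) ->
  jacdet (g \o f) x = jacdet f x * jacdet g (f x).
Proof. by move=> df dg; rewrite /jacdet jac_comp // det_mulmx. Qed.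

Lemma jac_id m (x : 'rV[R]_m) : 'J (@id 'rV[R]_m) x = 1%:M.
Proof.
rewrite /jacobian; apply: lin1_mx_fun => u.
by rewrite diff_val mulmx1.
Qed.

Lemma diffeo_inv m (f g : 'rV[R]_m -> 'rV[R]_m) : diffeo f g ->
  forall y, jacdet g y * jacdet f (g y) = 1.
Proof.
move=> [fK [gK [df [dg _]]]] y.
rewrite -jacdet_comp //.
have -> : f \o g = id by apply/funext => z; exact: gK.
by rewrite /jacdet jac_id det1.
Qed.

Lemma castrow_id m (v : 'rV[R]_m) : castrow (erefl m) v = v.
Proof. by rewrite /castrow castmx_id. Qed.

Lemma jd_conj_up m p (e : m = p) (A : 'rV[R]_p -> 'rV[R]_p) (B : 'rV[R]_m -> 'rV[R]_m) x :
  differentiable B x -> differentiable A (castrow e (B x)) ->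
  jacdet (fun v => castrow (esym e) (A (castrow e (B v)))) x
   = jacdet B x * jacdet A (castrow e (B x)).
Proof.
move: A; case: p / e => A dB.
rewrite castrow_id => dA.
have -> : (fun v => castrow (esym (erefl m)) (A (castrow (erefl m) (B v)))) = A \o B.
  by apply/funext => v; rewrite /= !castrow_id.
exact: jacdet_comp.
Qed.

Lemma jd_conj_down m p (e : m = p) (A : 'rV[R]_m -> 'rV[R]_m) (C : 'rV[R]_p -> 'rV[R]_p) x :
  differentiable C x -> differentiable A (castrow (esym e) (C x)) ->
  jacdet (fun t => castrow e (A (castrow (esym e) (C t)))) x
   = jacdet C x * jacdet A (castrow (esym e) (C x)).
Proof.
move: C x; case: p / e => C x dC.
rewrite castrow_id => dA.
have -> : (fun t => castrow (erefl m) (A (castrow (esym (erefl m)) (C t)))) = A \o C.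
  by apply/funext => v; rewrite /= !castrow_id.
exact: jacdet_comp.
Qed.

Lemma prodnu_row (nu : R -> R) a b (x : 'rV[R]_a) (y : 'rV[R]_b) :
  prodnu nu (row_mx x y) = prodnu nu x * prodnu nu y.
Proof.
rewrite /prodnu big_split_ord; congr (_ * _); apply: eq_bigr => i _.
  by rewrite row_mxEl.
by rewrite row_mxEr.
Qed.

Lemma prodnu_cast (nu : R -> R) m p (e : m = p) (v : 'rV[R]_m) :
  prodnu nu (castrow e v) = prodnu nu v.
Proof. by case: p / e; rewrite castrow_id. Qed.

Lemma G_jd a b (T : 'rV[R]_a -> 'rV[R]_a) (v : 'rV[R]_(a + b)) :
  differentiable T (lsubmx v) ->
  jacdet (fun v : 'rV[R]_(a + b) => row_mx (T (lsubmx v)) (rsubmx v)) v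
    = jacdet T (lsubmx v).
Proof.
move=> dT; have [_ E] := @G_diff R a b T v dT; rewrite /jacdet E.
by rewrite det_ublock det1 mulr1.
Qed.

End H2.

Section Alg.
Variable R : realType.

Lemma alg_core (pk pk' jk jk' P U A B J0 : R) : pk' * jk' = pk * jk ->
  0 < pk * (P * J0) -> 0 < jk -> U != 0 -> B * A = 1 ->
  pk' * (P * U * A) * jk' / (pk * (P * J0) * jk * U) * (J0 * 1 * B) = 1.
Proof.
move=> bal hpos hj hU hBA.
have hB0 : B != 0.
  by apply/eqP => h0; move: hBA; rewrite h0 mul0r => /eqP; rewrite eq_sym oner_eq0.
have hA : A = B^-1.
  by apply: (mulfI hB0); rewrite hBA divff.
have hpk0 : pk != 0 by apply/eqP => h0; move: hpos; rewrite h0 mul0r ltxx.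
have hPJ : P * J0 != 0 by apply/eqP => h0; move: hpos; rewrite h0 mulr0 ltxx.
have hj0 : jk != 0 by rewrite gt_eqF.
have hP0 : P != 0 by move: hPJ; rewrite mulf_eq0 negb_or => /andP[].
have hJ00 : J0 != 0 by move: hPJ; rewrite mulf_eq0 negb_or => /andP[].
have hb0 : pk' * jk' != 0 by rewrite bal mulf_neq0.
have hjk0 : jk' != 0 by move: hb0; rewrite mulf_eq0 negb_or => /andP[].
have hpiK' : pk' = pk * jk / jk'.
  by rewrite -bal mulfK.
rewrite hpiK' hA.
field.
by rewrite hU hj0 hJ00 hP0 hpk0 hB0 hjk0.
Qed.

Lemma alg_up (pk pk' jk jk' P U A B J0 : R) : pk' * jk' = pk * jk ->
  0 < pk * (P * J0) -> 0 < jk -> U != 0 -> B * A = 1 ->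
  Num.min 1 (pk' * (P * U * A) * jk' / (pk * (P * J0) * jk * U) * (J0 * 1 * B)) = 1.
Proof. by move=> *; rewrite alg_core // minxx. Qed.
Lemma alg_down (pk pk' jk jk' Pl Pr A B J0 : R) : pk' * jk' = pk * jk ->
  0 < pk * (Pl * Pr * J0) -> 0 < jk -> B * A = 1 ->
  Num.min 1 (pk' * (Pl * A) * jk' * Pr / (pk * (Pl * Pr * J0) * jk * 1) * (J0 * (1 * B))) = 1.
Proof.
move=> bal hpos hj hBA.
have -> : pk' * (Pl * A) * jk' * Pr / (pk * (Pl * Pr * J0) * jk * 1) * (J0 * (1 * B))
  = pk' * (Pl * Pr * 1 * A) * jk' / (pk * (Pl * Pr * J0) * jk * 1) * (J0 * 1 * B).
  ring.
by rewrite (@alg_core pk pk' jk jk' (Pl * Pr) 1 A B J0) // ?minxx // oner_neq0.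
Qed.
End Alg.

Lemma up_case (R : realType) (K : countType) (n : K -> nat)
  (nu : R -> R)
  (piK : K -> R) (pic : forall k, 'rV[R]_(n k) -> R)
  (j : K -> K -> R)
  (T Tinv : forall k, 'rV[R]_(n k) -> 'rV[R]_(n k))
  (hbar hbarinv : forall k k', 'rV[R]_(n k + (n k' - n k)) -> 'rV[R]_(n k + (n k' - n k)))
  (piK_ge0 : forall k, 0 <= piK k)
  (T_diffeo : forall k, diffeo (T k) (Tinv k))
  (T_push : forall k, pushforward_dens (T k) (pic k) (prodnu nu))
  (hbar_diffeo : forall k k', (n k <= n k')%N -> diffeo (hbar k k') (hbarinv k k'))
  (hbar_vp : forall k k', (n k <= n k')%N -> volume_preserving (hbar k k'))
  (hbar_push : forall k k', (n k <= n k')%N ->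
     pushforward_dens (hbar k k') (prodnu nu) (prodnu nu))
  (balance : forall k k', piK k' * j k' k = piK k * j k k') :
  (forall (k k' : K) (le : (n k <= n k')%N) (th : 'rV[R]_(n k)) (u : 'rV[R]_(n k' - n k)),
     k' != k -> 0 < piK k * pic k th -> 0 < j k k' -> 0 < prodnu nu u ->
     alpha_up nu piK pic j T Tinv hbar le th u = 1).
Proof.
move=> k k' le th u _ hpos hj hu.
rewrite /alpha_up.
set e := subnKC le.
set G := (fun v : 'rV[R]_(n k + (n k' - n k)) => row_mx (T k (lsubmx v)) (rsubmx v)).
have [TK [TiK [dT [dTi _]]]] := T_diffeo k.
have [TK' [TiK' [dT' [dTi' _]]]] := T_diffeo k'.
have [_ [HiK [dH _]]] := hbar_diffeo k k' le.
have dG : differentiable G (row_mx th u).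
  by have [] := @G_diff R (n k) (n k' - n k) (T k) (row_mx th u) (dT _).
have dB : differentiable (hbar k k' \o G) (row_mx th u) by exact: differentiable_comp.
set z := T k th.
have GE : G (row_mx th u) = row_mx z u by rewrite /G row_mxKl row_mxKr.
set y := hbar k k' (row_mx z u).
set c := castrow e y.
have hE : h_up T Tinv hbar le (row_mx th u) = Tinv k' c.
  by rewrite /h_up row_mxKl row_mxKr.
rewrite hE.
have H1 := @jd_conj_up R _ _ e (Tinv k') (hbar k k' \o G) (row_mx th u) dB (dTi' _).
have EJ : jacdet (fun v => castrow (esym e) (h_up T Tinv hbar le v)) (row_mx th u)
   = jacdet (T k) th * jacdet (hbar k k') (row_mx z u) * jacdet (Tinv k') c.
  change (jacdet (fun v => castrow (esym e) (Tinv k' (castrow e ((hbar k k' \o G) v)))) (row_mx th u) = 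
     jacdet (T k) th * jacdet (hbar k k') (row_mx z u) * jacdet (Tinv k') c).
  rewrite H1 (@jacdet_comp R _ G (hbar k k') _ dG (dH _)) /= GE.
  have -> : jacdet G (row_mx th u) = jacdet (T k) th.
    by rewrite (@G_jd R (n k) (n k' - n k) (T k) (row_mx th u) (dT _)) row_mxKl.
  reflexivity.
rewrite EJ.
have pk : pic k th = prodnu nu z * `|jacdet (T k) th| by exact: T_push.
have pk' : pic k' (Tinv k' c) = prodnu nu y * `|jacdet (T k') (Tinv k' c)|.
  by rewrite T_push TiK' /c prodnu_cast.
have py : prodnu nu z * prodnu nu u = prodnu nu y.
  by rewrite -prodnu_row (hbar_push k k' le) (hbar_vp k k' le) mulr1.
have inv := @diffeo_inv R _ _ _ (T_diffeo k') c.
have hv := hbar_vp k k' le (row_mx z u).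
rewrite pk' pk !normrM hv mulr1 -py.
have hBA : `|jacdet (Tinv k') c| * `|jacdet (T k') (Tinv k' c)| = 1.
  by rewrite -normrM inv normr1.
rewrite pk in hpos.
exact: (@alg_up R (piK k) (piK k') (j k k') (j k' k) (prodnu nu z) (prodnu nu u) _ _ _
   (balance k k') hpos hj (lt0r_neq0 hu) hBA).
Qed.

Lemma down_case (R : realType) (K : countType) (n : K -> nat)
  (nu : R -> R)
  (piK : K -> R) (pic : forall k, 'rV[R]_(n k) -> R)
  (j : K -> K -> R)
  (T Tinv : forall k, 'rV[R]_(n k) -> 'rV[R]_(n k))
  (hbar hbarinv : forall k k', 'rV[R]_(n k + (n k' - n k)) -> 'rV[R]_(n k + (n k' - n k)))
  (T_diffeo : forall k, diffeo (T k) (Tinv k))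
  (T_push : forall k, pushforward_dens (T k) (pic k) (prodnu nu))
  (hbar_diffeo : forall k k', (n k <= n k')%N -> diffeo (hbar k k') (hbarinv k k'))
  (hbar_vp : forall k k', (n k <= n k')%N -> volume_preserving (hbar k k'))
  (hbar_push : forall k k', (n k <= n k')%N ->
     pushforward_dens (hbar k k') (prodnu nu) (prodnu nu))
  (balance : forall k k', piK k' * j k' k = piK k * j k k') :
  (forall (k k' : K) (le : (n k' <= n k)%N) (th : 'rV[R]_(n k)),
     0 < piK k * pic k th -> 0 < j k k' ->
     alpha_down nu piK pic j T Tinv hbarinv le th = 1).
Proof.
move=> k k' le th hpos hj.
rewrite /alpha_down.
have [TK [TiK [dT [dTi _]]]] := T_diffeo k.
have [TK' [TiK' [dT' [dTi' _]]]] := T_diffeo k'.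
have [HK [HiK [dH [dHi _]]]] := hbar_diffeo k' k le.
pose e := subnKC le.
pose z := T k th.
pose c := castrow (esym e) z.
pose w := hbarinv k' k c.
pose lw := lsubmx w. pose rw := rsubmx w.
pose G := (fun v : 'rV[R]_(n k' + (n k - n k')) => row_mx (Tinv k' (lsubmx v)) (rsubmx v)).
have hD : h_down T Tinv hbarinv le th = row_mx (Tinv k' lw) rw := erefl.
rewrite hD row_mxKl row_mxKr.
have dG : differentiable G w.
  by have [] := @G_diff R (n k') (n k - n k') (Tinv k') w (dTi' _).
have dA : differentiable (G \o hbarinv k' k) c by exact: differentiable_comp.
have EJ : jacdet (fun t => castrow (subnKC le) (h_down T Tinv hbarinv le t)) th
   = jacdet (T k) th * (jacdet (hbarinv k' k) c * jacdet (Tinv k') lw).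
  change (jacdet (fun t => castrow e ((G \o hbarinv k' k) (castrow (esym e) (T k t)))) th
     = jacdet (T k) th * (jacdet (hbarinv k' k) c * jacdet (Tinv k') lw)).
  rewrite (@jd_conj_down R _ _ e (G \o hbarinv k' k) (T k) th (dT _) dA).
  rewrite (@jacdet_comp R _ (hbarinv k' k) G c (dHi _) dG).
  rewrite (@G_jd R (n k') (n k - n k') (Tinv k') w (dTi' _)).
  reflexivity.
rewrite EJ.
have pk : pic k th = prodnu nu z * `|jacdet (T k) th| by exact: T_push.
have pk' : pic k' (Tinv k' lw) = prodnu nu lw * `|jacdet (T k') (Tinv k' lw)|.
  by rewrite T_push TiK'.
have pw : prodnu nu lw * prodnu nu rw = prodnu nu z.
  rewrite -prodnu_row hsubmxK (hbar_push k' k le) (hbar_vp k' k le) mulr1.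
  rewrite /w HiK /c prodnu_cast; reflexivity.
have hHi : `|jacdet (hbarinv k' k) c| = 1.
  have := @diffeo_inv R _ _ _ (hbar_diffeo k' k le) c.
  move=> H; rewrite -[LHS]mulr1 -[X in _ * X](hbar_vp k' k le (hbarinv k' k c)) -normrM H normr1; reflexivity.
have hBA : `|jacdet (Tinv k') lw| * `|jacdet (T k') (Tinv k' lw)| = 1.
  rewrite -normrM (@diffeo_inv R _ _ _ (T_diffeo k') lw) normr1; reflexivity.
rewrite pk' pk !normrM hHi -pw.
rewrite pk -pw in hpos.
exact: (@alg_down R (piK k) (piK k') (j k k') (j k' k) (prodnu nu lw) (prodnu nu rw) _ _ _
   (balance k k') hpos hj hBA).
Qed.

Theorem corollary1 (R : realType) (K : countType) (n : K -> nat)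
  (nu : R -> R)
  (piK : K -> R) (pic : forall k, 'rV[R]_(n k) -> R)
  (j : K -> K -> R)
  (T Tinv : forall k, 'rV[R]_(n k) -> 'rV[R]_(n k))
  (hbar hbarinv : forall k k', 'rV[R]_(n k + (n k' - n k)) -> 'rV[R]_(n k + (n k' - n k)))
  (* nu : a univariate probability density *)
  (nu_ge0 : forall x, 0 <= nu x)
  (nu_meas : measurable_fun [set: R] nu)
  (nu_int1 : (\int[@lebesgue_measure R]_x (nu x)%:E = 1)%E)
  (* pi(k) : marginal probability mass on the discrete set K *)
  (piK_ge0 : forall k, 0 <= piK k)
  (piK_sum1 : (\esum_(k in [set: K]) (piK k)%:E = 1)%E)
  (* j_k : probability distribution on K for each k *)
  (j_ge0 : forall k k', 0 <= j k k')
  (j_sum1 : forall k, (\esum_(k' in [set: K]) (j k k')%:E = 1)%E)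
  (* T_k diffeomorphism with T_k # pi_k = (x)_{n_k} nu *)
  (T_diffeo : forall k, diffeo (T k) (Tinv k))
  (T_push : forall k, pushforward_dens (T k) (pic k) (prodnu nu))
  (* hbar_{k,k'} (n_k <= n_k') volume-preserving diffeomorphism with
     hbar # (x)_{n_k'} nu = (x)_{n_k'} nu *)
  (hbar_diffeo : forall k k', (n k <= n k')%N -> diffeo (hbar k k') (hbarinv k k'))
  (hbar_vp : forall k k', (n k <= n k')%N -> volume_preserving (hbar k k'))
  (hbar_push : forall k k', (n k <= n k')%N ->
     pushforward_dens (hbar k k') (prodnu nu) (prodnu nu))
  (* balance condition on the model-jump distributions *)
  (balance : forall k k', piK k' * j k' k = piK k * j k k') :
  (* every proposed across-model move is accepted with probability 1 *)
  (forall (k k' : K) (le : (n k <= n k')%N) (th : 'rV[R]_(n k)) (u : 'rV[R]_(n k' - n k)),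
     k' != k -> 0 < piK k * pic k th -> 0 < j k k' -> 0 < prodnu nu u ->
     alpha_up nu piK pic j T Tinv hbar le th u = 1)
  /\
  (forall (k k' : K) (lt : (n k' < n k)%N) (th : 'rV[R]_(n k)),
     k' != k -> 0 < piK k * pic k th -> 0 < j k k' ->
     alpha_down nu piK pic j T Tinv hbarinv (ltnW lt) th = 1).
Proof.
split.
  move=> k k' le th u hne hpos hj hu.
  exact: (@up_case R K n nu piK pic j T Tinv hbar hbarinv piK_ge0 T_diffeo T_push
    hbar_diffeo hbar_vp hbar_push balance k k' le th u hne hpos hj hu).
move=> k k' lt th _ hpos hj.
exact: (@down_case R K n nu piK pic j T Tinv hbar hbarinv T_diffeo T_push
  hbar_diffeo hbar_vp hbar_push balance k k' (ltnW lt) th hpos hj).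
Qed.
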